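(* Let $V$ be a nonempty set (finite or infinite), let $E\subset V\times V$, and let $W\subset V$. For all vertices $b,c\in W^c=V\setminus W$ we have $$\operatorname{cl}_W\big(R_W b\big)\cap \operatorname{cl}_W\big(R_W c\big)=\emptyset \iff \neg\,\big(b\,A_W\,c\big),$$ that is, $b$ and $c$ are t-separated with respect to $W$ if and only if they are d-separated with respect to $W$.
   Context: Relations on $V$: $x\,R\,y$ means $(x,y)\in R$; the composition $RR'$ is defined by $x(RR')y$ iff there is $z\in V$ with $xRz$ and $zR'y$; $R^{-1}$ is the converse ($xR^{-1}y\iff yRx$); $R^0=\Delta$, $R^{n+1}=RR^n$, $R^+=\bigcup_{k\ge1}R^k$, $R^*=\bigcup_{k\ge0}R^k$. For $S\subset V$, $\Delta_S=\{(x,x):x\in S\}$ and $\Delta=\Delta_V$. For $S\subset V$, the foreset is $RS=\{x\in V:\exists s\in S,\ xRs\}$ and the afterset is $SR=\{y\in V:\exists s\in S,\ sRy\}$; for a vertex $c$, $Rc=R\{c\}$. For any relation $F$ on $V$, $\mathcal T_F=\{O\subset V: OF\subset O\}$ is a topology on $V$. Given $W\subset V$ with $W^c=V\setminus W$, define: $E_W=\Delta_{W^c}E$ (so $xE_Wy$ iff $x\in W^c$ and $xEy$); $B_W=E(E_W)^*$ and $B_W^-=(B_W)^{-1}=(E_W^{-1})^*E^{-1}$; $K_W=B_W^-\Delta_{W^c}B_W$ (equivalently $(E_W^{-1})^+(E_W)^+$); $C_W=(\Delta_WK_W\Delta_W)^+\cup\Delta_W$; $A_W=\Delta\cup B_W\cup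 B_W^-\cup K_W\cup(B_W\cup K_W)\,C_W\,(B_W^-\cup K_W^{-1})$; $R_W=\Delta\cup C_W(B_W^-\cup K_W^{-1})$. For $S\subset V$, $\operatorname{cl}_W(S)$ denotes the topological closure of $S$ in the topology $\mathcal T_{E_W}$. Vertices $b,c$ are called t-separated w.r.t. $W$ if $\operatorname{cl}_W(R_Wb)\cap\operatorname{cl}_W(R_Wc)=\emptyset$, and d-separated w.r.t. $W$ if $\neg(b\,A_W\,c)$. *)

(* Defs.v *)
From Stdlib Require Import Arith.

Definition relation (V : Type) := V -> V -> Prop.
Definition vset (V : Type) := V -> Prop.

Section Rel.
Context {V : Type}.

Definition rcomp (R R' : relation V) : relation V :=
  fun x y => exists z, R x z /\ R' z y.
Definition rconv (R : relation V) : relation V := fun x y => R y x.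
Definition rdiag : relation V := fun x y => x = y.
Definition rdiagS (S : vset V) : relation V := fun x y => x = y /\ S x.
Definition runion (R R' : relation V) : relation V := fun x y => R x y \/ R' x y.

Fixpoint rpow (R : relation V) (n : nat) : relation V :=
  match n with
  | 0 => rdiag
  | S n => rcomp R (rpow R n)
  end.
Definition rplus (R : relation V) : relation V :=
  fun x y => exists k, 1 <= k /\ rpow R k x y.
Definition rstar (R : relation V) : relation V :=
  fun x y => exists k, rpow R k x y.

Definition scompl (S : vset V) : vset V := fun x => ~ S x.

Definition foreset (R : relation V) (S : vset V) : vset V :=
  fun x => exists s, S s /\ R x s.
Definition afterset (S : vset V) (R : relation V) : vset V :=
  fun y => exists s, S s /\ R s y.
Definition foreset1 (R : relation V) (c : V) : vset V := foreset R (fun x => x = c).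

Definition F_open (F : relation V) (O : vset V) : Prop :=
  forall y, afterset O F y -> O y.
Definition F_closed (F : relation V) (C : vset V) : Prop := F_open F (scompl C).
Definition F_closure (F : relation V) (S : vset V) : vset V :=
  fun x => forall C, F_closed F C -> (forall y, S y -> C y) -> C x.

Section W.
Variables (E : relation V) (W : vset V).

Definition E_W : relation V := rcomp (rdiagS (scompl W)) E.
Definition B_W : relation V := rcomp E (rstar E_W).
Definition Bm_W : relation V := rconv B_W.
Definition K_W : relation V := rcomp (rcomp Bm_W (rdiagS (scompl W))) B_W.
Definition C_W : relation V :=
  runion (rplus (rcomp (rcomp (rdiagS W) K_W) (rdiagS W))) (rdiagS W).
Definition A_W : relation V :=
  runion rdiag (runion B_W (runion Bm_W (runion K_W
    (rcomp (rcomp (runion B_W K_W) C_W) (runion Bm_W (rconv K_W)))))).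
Definition R_W : relation V :=
  runion rdiag (rcomp C_W (runion Bm_W (rconv K_W))).
Definition cl_W (S : vset V) : vset V := F_closure E_W S.

Definition t_separated (b c : V) : Prop :=
  forall x, ~ (cl_W (foreset1 R_W b) x /\ cl_W (foreset1 R_W c) x).
Definition d_separated (b c : V) : Prop := ~ A_W b c.
End W.
End Rel.

(* Main.v *)
Require Import Defs.
From Stdlib Require Import Classical Arith Lia.

Section Gen.
Context {V : Type}.
Implicit Types R : relation V.

Lemma rstar_refl R x : rstar R x x.
Proof. exists 0. reflexivity. Qed.

Lemma rstar_step R x y z : R x y -> rstar R y z -> rstar R x z.
Proof. intros H [k Hk]. exists (S k). exists y. auto. Qed.

Lemma rstar_inv R x y : rstar R x y -> x = y \/ exists u, R x u /\ rstar R u y.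
Proof.
  intros [k Hk]. destruct k as [|k]; simpl in Hk.
  - left; exact Hk.
  - right. destruct Hk as [u [H1 H2]]. exists u; split; auto. exists k; auto.
Qed.

Lemma rstar_ind' R (y : V) (P : V -> Prop) :
  P y -> (forall x u, R x u -> rstar R u y -> P u -> P x) ->
  forall x, rstar R x y -> P x.
Proof.
  intros H0 HS x [k Hk]. revert x Hk. induction k as [|k IH]; intros x Hk; simpl in Hk.
  - unfold rdiag in Hk; subst; auto.
  - destruct Hk as [u [H1 H2]]. apply (HS x u); auto. exists k; auto.
Qed.

Lemma rstar_trans R x y z : rstar R x y -> rstar R y z -> rstar R x z.
Proof.
  intros H1 H2. revert x H1. apply rstar_ind'; auto.
  intros x u Hxu _ Hu. eapply rstar_step; eauto.
Qed.

Lemma rstar_snoc R x y z : rstar R x y -> R y z -> rstar R x z.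
Proof. intros H1 H2. eapply rstar_trans; eauto. eapply rstar_step; eauto. apply rstar_refl. Qed.

Lemma rplus_iff R x y : rplus R x y <-> exists u, R x u /\ rstar R u y.
Proof.
  split.
  - intros [k [Hk Hp]]. destruct k as [|k]; [lia|]. destruct Hp as [u [H1 H2]].
    exists u; split; auto. exists k; auto.
  - intros [u [H1 [k H2]]]. exists (S k); split; [lia|]. exists u; auto.
Qed.

Lemma rplus_trans R x y z : rplus R x y -> rplus R y z -> rplus R x z.
Proof.
  rewrite !rplus_iff. intros [u [H1 H2]] [v [H3 H4]]. exists u; split; auto.
  eapply rstar_trans; eauto. eapply rstar_step; eauto.
Qed.

Lemma rstar_sym R : (forall a b, R a b -> R b a) -> forall x y, rstar R x y -> rstar R y x.
Proof.
  intros Hs x y H. revert x H. apply rstar_ind'. apply rstar_refl.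
  intros x u Hxu _ Hu. eapply rstar_snoc; eauto.
Qed.

Lemma rplus_sym R : (forall a b, R a b -> R b a) -> forall x y, rplus R x y -> rplus R y x.
Proof.
  intros Hs x y. rewrite !rplus_iff. intros [u [H1 H2]].
  apply rstar_sym in H2; [|exact Hs]. destruct (rstar_inv R y u H2) as [->|[v [H3 H4]]].
  - exists x; split; auto. apply rstar_refl.
  - exists v; split; auto. eapply rstar_snoc; eauto.
Qed.

Lemma cl_iff (F : relation V) (S : vset V) x : F_closure F S x <-> exists y, rstar F x y /\ S y.
Proof.
  split.
  - intros H. apply H.
    + intros y [s [Hs HF]] Hy. apply Hs. destruct Hy as [z [Hz1 Hz2]].
      exists z; split; auto. eapply rstar_step; eauto.
    + intros y Hy. exists y; split; auto. apply rstar_refl.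
  - intros [y [Hxy Hy]] C HC HSC. revert x Hxy. apply rstar_ind'; auto.
    intros x u Hxu _ Hu. apply NNPP. intro Hn.
    apply (HC u); auto. exists x; split; auto.
Qed.
End Gen.

Section Main.
Context {V : Type} (E : relation V) (W : vset V).
Let F := E_W E W.

Lemma F_iff x y : F x y <-> ~ W x /\ E x y.
Proof. unfold F, E_W, rcomp, rdiagS, scompl. firstorder congruence. Qed.

Lemma B_iff x y : B_W E W x y <-> exists u, E x u /\ rstar F u y.
Proof. unfold B_W, rcomp. tauto. Qed.

Lemma K_iff x y : K_W E W x y <-> exists z, ~ W z /\ B_W E W z x /\ B_W E W z y.
Proof. unfold K_W, Bm_W, rcomp, rconv, rdiagS, scompl. split.
  - intros [z' [[z [H1 [-> H2]]] H3]]. exists z'; auto.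
  - intros [z [H1 [H2 H3]]]. exists z; split; auto. exists z; auto.
Qed.

Lemma K_sym x y : K_W E W x y -> K_W E W y x.
Proof. rewrite !K_iff. firstorder. Qed.

Definition KW := rcomp (rcomp (rdiagS W) (K_W E W)) (rdiagS W).

Lemma KW_iff x y : KW x y <-> W x /\ K_W E W x y /\ W y.
Proof. unfold KW, rcomp, rdiagS. split.
  - intros [z' [[z [[-> H1] H2]] [-> H3]]]. auto.
  - intros [H1 [H2 H3]]. exists y; split; auto. exists x; auto.
Qed.

Lemma KW_sym x y : KW x y -> KW y x.
Proof. rewrite !KW_iff. intuition auto using K_sym. Qed.

Lemma C_iff x y : C_W E W x y <-> rplus KW x y \/ (x = y /\ W x).
Proof. unfold C_W, runion, rdiagS. fold KW. tauto. Qed.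

Lemma C_sym x y : C_W E W x y -> C_W E W y x.
Proof. rewrite !C_iff. intros [H|[-> H]]; auto. left. apply rplus_sym; auto. exact KW_sym. Qed.

Lemma C_W_l x y : C_W E W x y -> W x.
Proof.
  rewrite C_iff. intros [H|[_ H]]; auto. apply rplus_iff in H.
  destruct H as [u [H _]]. apply KW_iff in H; tauto.
Qed.

Lemma C_W_r x y : C_W E W x y -> W y.
Proof. intros H. apply C_sym in H. eapply C_W_l; eauto. Qed.

Lemma C_trans x y z : C_W E W x y -> C_W E W y z -> C_W E W x z.
Proof.
  rewrite !C_iff. intros [H1|[-> H1]] [H2|[-> H2]]; auto.
  left; eapply rplus_trans; eauto.
Qed.

Lemma C_refl x : W x -> C_W E W x x.
Proof. intros H. apply C_iff. auto. Qed.

Lemma KW_C x y : W x -> W y -> K_W E W x y -> C_W E W x y.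
Proof.
  intros. apply C_iff. left. apply rplus_iff. exists y. split.
  apply KW_iff; auto. apply rstar_refl.
Qed.

Definition BK b w := B_W E W b w \/ K_W E W b w.

Lemma R_iff y b : R_W E W y b <-> y = b \/ exists w, C_W E W y w /\ BK b w.
Proof. unfold R_W, runion, rcomp, rdiag, Bm_W, rconv, BK. tauto. Qed.

Lemma A_iff b c : A_W E W b c <-> b = c \/ B_W E W b c \/ B_W E W c b \/ K_W E W b c \/
   exists u v, BK b u /\ C_W E W u v /\ BK c v.
Proof. unfold A_W, runion, rcomp, rdiag, Bm_W, rconv, BK. split.
  - intros [H|[H|[H|[H|[v [[u [H1 H2]] H3]]]]]]; auto 6.
    right; right; right; right. exists u, v; auto.
  - intros [H|[H|[H|[H|[u [v [H1 [H2 H3]]]]]]]]; auto 6.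
    right; right; right; right. exists v; split; auto. exists u; auto.
Qed.

Lemma B_of_F x u y : F x u -> rstar F u y -> B_W E W x y.
Proof. intros H1 H2. apply B_iff. apply F_iff in H1. exists u; tauto. Qed.

Lemma star_of_B x y : ~ W x -> B_W E W x y -> rstar F x y.
Proof. intros Hx H. apply B_iff in H. destruct H as [u [H1 H2]].
  eapply rstar_step; eauto. apply F_iff; auto. Qed.

Lemma L1 x y z : rstar F x y -> rstar F x z ->
  y = z \/ (B_W E W y z /\ ~ W y) \/ (B_W E W z y /\ ~ W z) \/ K_W E W y z.
Proof.
  intros H1 H2. destruct (rstar_inv _ _ _ H1) as [->|[u [Hu1 Hu2]]].
  - destruct (rstar_inv _ _ _ H2) as [->|[v [Hv1 Hv2]]]; [left; reflexivity|].
    right; left. split. eapply B_of_F; eauto. apply F_iff in Hv1; tauto.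
  - destruct (rstar_inv _ _ _ H2) as [->|[v [Hv1 Hv2]]].
    + right; right; left. split. eapply B_of_F; eauto. apply F_iff in Hu1; tauto.
    + right; right; right. apply K_iff. exists x. split.
      apply F_iff in Hu1; tauto. split; [eapply (B_of_F x u)|eapply (B_of_F x v)]; eauto.
Qed.

Lemma cl_R b x : cl_W E W (foreset1 (R_W E W) b) x <-> exists y, rstar F x y /\ R_W E W y b.
Proof.
  unfold cl_W. rewrite cl_iff. unfold foreset1, foreset. fold F.
  split; intros [y [H1 H2]]; exists y; split; auto.
  - destruct H2 as [s [-> H]]; auto.
  - exists b; auto.
Qed.

End Main.

Theorem theorem1 (V : Type) (Hne : inhabited V) (E : relation V) (W : vset V)
  (b c : V) (Hb : ~ W b) (Hc : ~ W c) :
  (forall x, ~ (cl_W E W (foreset1 (R_W E W) b) x /\ cl_W E W (foreset1 (R_W E W) c) x))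
  <-> ~ A_W E W b c.
Proof.
  split.
  - intros H HA. apply A_iff in HA.
    assert (Rrefl : forall a, R_W E W a a) by (intro a; apply R_iff; auto).
    destruct HA as [<-|[HB|[HB|[HK|[u [v [H1 [H2 H3]]]]]]]].
    + apply (H b). rewrite !cl_R. split; exists b; split; auto; apply rstar_refl.
    + apply (H b). rewrite !cl_R. split.
      * exists b; split; auto; apply rstar_refl.
      * exists c; split; auto. apply star_of_B; auto.
    + apply (H c). rewrite !cl_R. split.
      * exists b; split; auto. apply star_of_B; auto.
      * exists c; split; auto; apply rstar_refl.
    + apply K_iff in HK. destruct HK as [z [Hz [Hzb Hzc]]].
      apply (H z). rewrite !cl_R. split.
      * exists b; split; auto. apply star_of_B; auto.
      * exists c; split; auto. apply star_of_B; auto.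
    + apply (H u). rewrite !cl_R. split; exists u; split; try apply rstar_refl;
        apply R_iff; right.
      * exists u; split; auto. apply C_refl. eapply C_W_l; eauto.
      * exists v; split; auto.
  - intros HA x [H1 H2]. apply HA. apply A_iff.
    apply cl_R in H1. apply cl_R in H2.
    destruct H1 as [y1 [Hx1 Hy1]]. destruct H2 as [y2 [Hx2 Hy2]].
    apply R_iff in Hy1. apply R_iff in Hy2.
    pose proof (L1 E W x y1 y2 Hx1 Hx2) as HL.
    destruct Hy1 as [->|[w1 [Hc1 Hbk1]]]; destruct Hy2 as [->|[w2 [Hc2 Hbk2]]].
    + tauto.
    + pose proof (C_W_l E W _ _ Hc2) as Wy2.
      right; right; right; right. exists y2, w2. repeat split; auto.
      unfold BK. destruct HL as [->|[[? ?]|[[? ?]|?]]]; tauto.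
    + pose proof (C_W_l E W _ _ Hc1) as Wy1.
      right; right; right; right. exists w1, y1. repeat split; auto.
      * apply C_sym; auto.
      * unfold BK. destruct HL as [->|[[? ?]|[[? ?]|?]]]; try tauto.
        right; apply K_sym; auto.
    + pose proof (C_W_l E W _ _ Hc1) as Wy1.
      pose proof (C_W_l E W _ _ Hc2) as Wy2.
      right; right; right; right. exists w1, w2. repeat split; auto.
      destruct HL as [->|[[? ?]|[[? ?]|HK]]]; try tauto.
      * eapply C_trans; eauto. apply C_sym; auto.
      * apply (C_trans E W w1 y1 w2); [apply C_sym; auto|].
        apply (C_trans E W y1 y2 w2); [apply KW_C; auto|auto].
Qed.
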